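(* Let $d\ge 2$ and let $\Delta$ be a $(d-1)$-dimensional balanced simplicial complex, with coloring $\kappa:V(\Delta)\to[d]$, that is doubly Buchsbaum over $\mathbf{k}$. Then for every nonempty proper subset $S\subsetneq[d]$, the rank-selected subcomplex $\Delta_S$ is Buchsbaum* over $\mathbf{k}$. In particular, every rank-selected subcomplex $\Delta_S$ ($\emptyset\ne S\subsetneq[d]$) of a balanced Buchsbaum* complex is Buchsbaum*.
   Context: All simplicial complexes are finite; $\mathbf{k}$ is a fixed field and all homology is reduced simplicial homology with coefficients in $\mathbf{k}$. For a face $\tau$ of $\Delta$: $\mathrm{lk}_\Delta(\tau)=\{\sigma\in\Delta:\sigma\cap\tau=\emptyset,\ \sigma\cup\tau\in\Delta\}$ and $\mathrm{cost}_\Delta(\tau)=\{\sigma\in\Delta:\sigma\not\supseteq\tau\}$. For $A\subseteq V(\Delta)$, $\Delta-A$ is the restriction (induced subcomplex) of $\Delta$ to $V(\Delta)\setminus A$; $\Delta-v=\Delta-\{v\}$. A $(d-1)$-dimensional complex $\Delta$ is Cohen–Macaulay (CM) over $\mathbf{k}$ if for every face $F$ (including $\emptyset$), $\widetilde H_i(\mathrm{lk}_\Delta F)=0$ for all $i<d-1-|F|$; it is Buchsbaum over $\mathbf{k}$ if it is pure and this holds for every nonempty face $F$. $\Delta$ is doubly Buchsbaum if it is Buchsbaum and $\Delta-v$ is Buchsbaum of dimension $d-1$ for every vertex $v$. A $(d-1)$-dimensional Buchsbaum complex $\Delta$ is Buchsbaum* over $\mathbf{k}$ if for every point $p$ of the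 geometric realization $|\Delta|$, the canonical map $\widetilde H_{d-1}(|\Delta|)\to \widetilde H_{d-1}(|\Delta|,|\Delta|-p)$ is surjective (equivalently, for every face $\tau$, the map $\widetilde H_{d-1}(\Delta)\to\widetilde H_{d-1}(\Delta,\mathrm{cost}_\Delta\tau)$ induced by inclusion is surjective). $\Delta$ is balanced if there is a coloring $\kappa:V(\Delta)\to[d]$ with $\kappa(u)\neq\kappa(v)$ for every edge $\{u,v\}$; for $S\subseteq[d]$, the rank-selected subcomplex is $\Delta_S=\{\tau\in\Delta:\kappa(\tau)\subseteq S\}$. (It is known that Buchsbaum* complexes are doubly Buchsbaum.) *)

(* Defs.v *)
From HB Require Import structures.
From mathcomp Require Import all_boot all_order all_algebra.
Set Implicit Arguments. Unset Strict Implicit. Unset Printing Implicit Defensive.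
Import GRing.Theory.
Local Open Scope ring_scope.

Definition is_complex (V : finType) (D : {set {set V}}) : Prop :=
  forall s t : {set V}, s \in D -> t \subset s -> t \in D.

Definition is_vertex (V : finType) (D : {set {set V}}) (v : V) : bool :=
  [set v] \in D.

Definition lk (V : finType) (D : {set {set V}}) (t : {set V}) : {set {set V}} :=
  [set s in D | [disjoint s & t] && (s :|: t \in D)].

Definition cost (V : finType) (D : {set {set V}}) (t : {set V}) : {set {set V}} :=
  [set s in D | ~~ (t \subset s)].

Definition del (V : finType) (D : {set {set V}}) (A : {set V}) : {set {set V}} :=
  [set s in D | [disjoint s & A]].

(* number of vertices of a largest face (= dim + 1) *)
Definition cdim (V : finType) (D : {set {set V}}) : nat :=
  \max_(s in D) #|s|.

(* pure of dimension d-1 *)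
Definition pure_dim (V : finType) (D : {set {set V}}) (d : nat) : Prop :=
  (exists2 t, t \in D & #|t| = d) /\
  (forall s, s \in D -> (#|s| <= d)%N) /\
  (forall s, s \in D -> exists2 t, t \in D & s \subset t /\ #|t| = d).

(* ---- reduced simplicial chains with coefficients in a field F ----
   A chain is a finitely supported function from subsets of V to F;
   a k-element face sits in homological degree k-1 (the empty face in
   degree -1, giving reduced homology).  Orientation: the order of V
   given by enum_rank. *)
Definition bd (F : fieldType) (V : finType) (c : {ffun {set V} -> F})
  : {ffun {set V} -> F} :=
  [ffun s : {set V} => \sum_(v : V | v \notin s)
      (-1) ^+ #|[set u in s | (enum_rank u < enum_rank v)%N]| * c (v |: s)].

(* c is a chain of D in degree k-1 *)
Definition chain_of (F : fieldType) (V : finType) (D : {set {set V}}) (k : nat)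
  (c : {ffun {set V} -> F}) : Prop :=
  forall s, c s != 0 -> (s \in D) && (#|s| == k).

Definition supp_in (F : fieldType) (V : finType) (G : {set {set V}})
  (c : {ffun {set V} -> F}) : Prop :=
  forall s, c s != 0 -> s \in G.

(* reduced homology H~_{k-1}(D; F) vanishes *)
Definition Hvanish (F : fieldType) (V : finType) (D : {set {set V}}) (k : nat)
  : Prop :=
  forall z : {ffun {set V} -> F}, chain_of D k z -> bd z = 0 ->
    exists2 b : {ffun {set V} -> F}, chain_of D k.+1 b & z = bd b.

(* the map H~_{k-1}(D) -> H~_{k-1}(D, G) (G a subcomplex of D) is surjective:
   every relative cycle z is homologous rel G to an absolute cycle w. *)
Definition rel_surj (F : fieldType) (V : finType) (D G : {set {set V}}) (k : nat)
  : Prop :=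
  forall z : {ffun {set V} -> F}, chain_of D k z -> supp_in G (bd z) ->
    exists w b : {ffun {set V} -> F},
      [/\ chain_of D k w, bd w = 0, chain_of D k.+1 b &
          supp_in G (z - w - bd b)].

Definition Buchsbaum (F : fieldType) (V : finType) (D : {set {set V}}) (d : nat)
  : Prop :=
  pure_dim D d /\
  forall t, t \in D -> t != set0 ->
    forall k : nat, (k < d - #|t|)%N -> Hvanish F (lk D t) k.

Definition doubly_Buchsbaum (F : fieldType) (V : finType) (D : {set {set V}})
  (d : nat) : Prop :=
  Buchsbaum F D d /\
  forall v, is_vertex D v -> Buchsbaum F (del D [set v]) d.

Definition Buchsbaum_star_d (F : fieldType) (V : finType) (D : {set {set V}})
  (d : nat) : Prop :=
  Buchsbaum F D d /\
  forall t, t \in D -> rel_surj F D (cost D t) d.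

Definition Buchsbaum_star (F : fieldType) (V : finType) (D : {set {set V}})
  : Prop := Buchsbaum_star_d F D (cdim D).

Definition balanced (V : finType) (D : {set {set V}}) (d : nat)
  (kappa : V -> 'I_d) : Prop :=
  forall u v, u != v -> [set u; v] \in D -> kappa u != kappa v.

Definition rank_sel (V : finType) (D : {set {set V}}) (d : nat)
  (kappa : V -> 'I_d) (S : {set 'I_d}) : {set {set V}} :=
  [set s in D | kappa @: s \subset S].

(* Main.v *)
Require Import Defs.
From HB Require Import structures.
From mathcomp Require Import all_boot all_order all_algebra.
From Stdlib Require Import ClassicalEpsilon Lia.
Set Implicit Arguments. Unset Strict Implicit. Unset Printing Implicit Defensive.
Import GRing.Theory.
Local Open Scope ring_scope.

Section Chains.
Variables (F : fieldType) (V : finType).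
Local Notation ch := {ffun {set V} -> F}.
Implicit Types (s t : {set V}) (c : ch) (G : {set {set V}}).

Definition eps s (v : V) : F :=
  (-1) ^+ #|[set u in s | (enum_rank u < enum_rank v)%N]|.

Lemma bdE c s : bd c s = \sum_(v | v \notin s) eps s v * c (v |: s).
Proof. by rewrite ffunE. Qed.

Lemma eps2 s v : eps s v * eps s v = 1.
Proof. by rewrite -expr2 sqrr_sign. Qed.

Lemma eps_neq0 s v : eps s v != 0.
Proof. by rewrite /eps signr_eq0. Qed.

Definition sg (b : bool) : F := if b then -1 else 1.

Lemma epsU1 s w v : w \notin s ->
  eps (w |: s) v = sg (enum_rank w < enum_rank v)%N * eps s v.
Proof.
move=> ws; rewrite /eps /sg.
case: ifP => h.
  rewrite (_ : [set u in w |: s | _] = w |: [set u in s | (enum_rank u < enum_rank v)%N]).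
    by rewrite cardsU1 inE (negPf ws) /= exprS.
  apply/setP=> u; rewrite !inE; case: (eqVneq u w) => [->|] //=; by rewrite h.
rewrite mul1r (_ : [set u in w |: s | _] = [set u in s | (enum_rank u < enum_rank v)%N]) //.
apply/setP=> u; rewrite !inE; case: (eqVneq u w) => [->|] //=; by rewrite h (negPf ws).
Qed.

Lemma sg_anti (v w : V) : v != w ->
  sg (enum_rank w < enum_rank v)%N * sg (enum_rank v < enum_rank w)%N = -1.
Proof.
move=> vw; rewrite /sg.
case: (ltngtP (enum_rank w) (enum_rank v)) => h.
- by rewrite mulr1.
- by rewrite mul1r.
move/val_inj/enum_rank_inj: h => h; by rewrite h eqxx in vw.
Qed.

Lemma sgN (v w : V) : v != w ->
  sg (enum_rank v < enum_rank w)%N = - sg (enum_rank w < enum_rank v)%N.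
Proof.
move=> vw; rewrite /sg.
case: (ltngtP (enum_rank w) (enum_rank v)) => h.
- by rewrite opprK.
- by [].
move/val_inj/enum_rank_inj: h => h; by rewrite h eqxx in vw.
Qed.

Lemma bdD (a b : ch) : bd (a + b) = bd a + bd b.
Proof.
apply/ffunP=> s; rewrite !ffunE -big_split /=; apply: eq_bigr => v _.
by rewrite ffunE mulrDr.
Qed.

Lemma bdN (a : ch) : bd (- a) = - bd a.
Proof.
apply/ffunP=> s; rewrite !ffunE -sumrN; apply: eq_bigr => v _.
by rewrite ffunE mulrN.
Qed.

Lemma bd0 : bd (0 : ch) = 0.
Proof. by apply/ffunP=> s; rewrite !ffunE big1 // => v _; rewrite ffunE mulr0. Qed.

Lemma bdB (a b : ch) : bd (a - b) = bd a - bd b.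
Proof. by rewrite bdD bdN. Qed.

Lemma bd_sum (I : finType) (P : pred I) (g : I -> ch) :
  bd (\sum_(i | P i) g i) = \sum_(i | P i) bd (g i).
Proof. exact: (big_morph _ bdD bd0). Qed.

Definition cone (x : V) c : ch :=
  [ffun s : {set V} => if x \in s then eps (s :\ x) x * c (s :\ x) else 0].
Definition lp (x : V) c : ch :=
  [ffun s : {set V} => if x \in s then 0 else eps s x * c (x |: s)].

Lemma coneE x c s : cone x c s = if x \in s then eps (s :\ x) x * c (s :\ x) else 0.
Proof. by rewrite ffunE. Qed.
Lemma lpE x c s : lp x c s = if x \in s then 0 else eps s x * c (x |: s).
Proof. by rewrite ffunE. Qed.
Lemma chD (a b : ch) s : (a + b) s = a s + b s. Proof. by rewrite ffunE. Qed.
Lemma chN (a : ch) s : (- a) s = - a s. Proof. by rewrite ffunE. Qed.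
Lemma chB (a b : ch) s : (a - b) s = a s - b s. Proof. by rewrite !ffunE. Qed.
Lemma ch0 s : (0 : ch) s = 0. Proof. by rewrite ffunE. Qed.

Lemma mul4A (a b e1 e2 cc : F) : a * e1 * (b * e2 * cc) = a * b * (e2 * (e1 * cc)).
Proof. by rewrite -!mulrA; congr (a * _); rewrite mulrCA; congr (b * _); rewrite mulrCA. Qed.

Lemma cone_lp x c s : cone x (lp x c) s = if x \in s then c s else 0.
Proof.
rewrite !ffunE; case: ifP => // xs; rewrite setD1K // !inE eqxx /=.
by rewrite mulrA eps2 mul1r.
Qed.

Lemma lp_cone x c : (forall s : {set V}, x \in s -> c s = 0) -> lp x (cone x c) = c.
Proof.
move=> h; apply/ffunP=> s; rewrite !ffunE; case: ifP => xs; first by rewrite h.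
by rewrite setU11 setU1K ?xs // mulrA eps2 mul1r.
Qed.

Lemma setD1U1 (x v : V) s : x != v -> (v |: s) :\ x = v |: (s :\ x).
Proof. by move=> xv; apply/setP=> u; rewrite !inE; case: (eqVneq u v) => // ->; rewrite eq_sym xv. Qed.

Lemma bd_cone x c : (forall s : {set V}, x \in s -> c s = 0) ->
  bd (cone x c) = c - cone x (bd c).
Proof.
move=> h; apply/ffunP=> s; rewrite bdE chB coneE.
case: ifP => xs.
  rewrite h // sub0r bdE.
  set s' := s :\ x.
  have xs' : x \notin s' by rewrite !inE eqxx.
  have ss : s = x |: s' by rewrite /s' setD1K.
  rewrite [in RHS](bigD1 x) //= h ?setU11 // mulr0 add0r mulr_sumr -sumrN.
  rewrite [in RHS](eq_bigl (fun v => v \notin s)); last first.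
    by move=> v; rewrite ss !inE negb_or andbC.
  apply: eq_bigr => v vs.
  have vx : v != x by apply: contraNneq vs => ->.
  have vs' : v \notin s' by apply: contra vs; rewrite /s' !inE => /andP[].
  rewrite ffunE !inE eq_sym (negPf vx) xs /= setD1U1 1?eq_sym //.
  rewrite {1}ss epsU1 // epsU1 // mul4A (sg_anti vx) mulN1r //.
rewrite subr0 (bigD1 x) ?xs //= big1 ?addr0.
  by rewrite ffunE setU11 setU1K ?xs // mulrA eps2 mul1r.
move=> v /andP[vs vx]; rewrite ffunE !inE [x == v]eq_sym (negPf vx) xs /= mulr0 //.
Qed.

Lemma bd_lp x c s : bd (lp x c) s = if x \in s then 0 else - eps s x * bd c (x |: s).
Proof.
rewrite bdE; case: ifP => xs.
  by rewrite big1 // => v _; rewrite ffunE !inE xs orbT mulr0.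
rewrite bdE mulr_sumr (bigD1 x) ?xs //= ffunE setU11 mulr0 add0r.
rewrite (eq_bigl (fun v => v \notin x |: s)); last first.
  by move=> v; rewrite !inE negb_or andbC.
apply: eq_bigr => v vs.
move: vs; rewrite !inE negb_or => /andP[vx vs].
rewrite ffunE !inE [x == v]eq_sym (negPf vx) xs /=.
rewrite (epsU1 _ vs) (epsU1 _ (negbT xs)) setUCA (sgN vx) !mulNr mulrN; congr (- _).
by rewrite !mulrA; congr (_ * _); rewrite [LHS]mulrC mulrA mulrAC.
Qed.


Lemma disjP (A B : {set V}) : reflect (forall x, x \in A -> x \notin B) [disjoint A & B].
Proof.
rewrite disjoints_subset; apply: (iffP subsetP) => h x xA.
  by move: (h x xA); rewrite inE.
by rewrite inE; exact: h.
Qed.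

Lemma inlk G t s : (s \in lk G t) = [&& s \in G, [disjoint s & t] & s :|: t \in G].
Proof. by rewrite inE. Qed.
Lemma incost G t s : (s \in cost G t) = (s \in G) && ~~ (t \subset s).
Proof. by rewrite inE. Qed.
Lemma indel G A s : (s \in del G A) = (s \in G) && [disjoint s & A].
Proof. by rewrite inE. Qed.

Lemma sumE (I : finType) (P : pred I) (g : I -> ch) s :
  (\sum_(i | P i) g i) s = \sum_(i | P i) g i s.
Proof. exact: sum_ffunE. Qed.

Lemma chain0 G k : chain_of G k (0 : ch).
Proof. by move=> s; rewrite ch0 eqxx. Qed.

Lemma chainB G k (a b : ch) : chain_of G k a -> chain_of G k b -> chain_of G k (a - b).
Proof.
move=> ha hb s; rewrite chB.
case: (eqVneq (a s) 0) => [a0|/ha //]; case: (eqVneq (b s) 0) => [b0|/hb //].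
by rewrite a0 b0 subrr eqxx.
Qed.

Lemma chain_sub G G' k c : {subset G <= G'} -> chain_of G k c -> chain_of G' k c.
Proof. by move=> sub h s /h /andP[/sub -> ->]. Qed.

Lemma chainP G k c s : chain_of G k c -> c s != 0 -> s \in G /\ #|s| = k.
Proof. by move=> h /h /andP[-> /eqP]. Qed.

Lemma bd_chain G k c : is_complex G -> chain_of G k.+1 c -> chain_of G k (bd c).
Proof.
move=> cG hc s; rewrite bdE => nz.
case: (pickP (fun v => (v \notin s) && (c (v |: s) != 0))) => [v /andP[vs cv]|h0].
  have [vG vk] := chainP hc cv.
  rewrite (cG _ _ vG (subsetU1 v s)) /=.
  by move: vk; rewrite cardsU1 vs add1n => -[->].
move: nz; rewrite big1 ?eqxx // => v vs.
by move: (h0 v); rewrite vs /= => /negbFE/eqP ->; rewrite mulr0.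
Qed.

Lemma bd_supp G k c : is_complex G -> chain_of G k c -> supp_in G (bd c).
Proof.
move=> cG hc s; rewrite bdE => nz.
case: (pickP (fun v => (v \notin s) && (c (v |: s) != 0))) => [v /andP[vs cv]|h0].
  have [vG vk] := chainP hc cv.
  exact: (cG _ _ vG (subsetU1 v s)).
move: nz; rewrite big1 ?eqxx // => v vs.
by move: (h0 v); rewrite vs /= => /negbFE/eqP ->; rewrite mulr0.
Qed.

Lemma cone0 x : cone x (0 : ch) = 0.
Proof. by apply/ffunP=> s; rewrite coneE !ch0 mulr0 if_same. Qed.

Lemma lp_vfree x c s : x \in s -> lp x c s = 0.
Proof. by rewrite lpE => ->. Qed.

Lemma cone_chain G k x c : is_complex G -> chain_of (lk G [set x]) k c ->
  chain_of G k.+1 (cone x c).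
Proof.
move=> cG hc s; rewrite coneE; case: ifP => xs; last by rewrite eqxx.
rewrite mulf_eq0 negb_or => /andP[_ /(chainP hc) [L k']].
move: L; rewrite inlk => /and3P[_ _].
rewrite setUC -/(x |: (s :\ x)) setD1K // => ->.
by rewrite (cardsD1 x) xs k' add1n eqxx.
Qed.

Lemma lp_chain G k x c : is_complex G -> chain_of G k.+1 c ->
  chain_of (lk G [set x]) k (lp x c).
Proof.
move=> cG hc s; rewrite lpE; case: ifP => xs; first by rewrite eqxx.
rewrite mulf_eq0 negb_or => /andP[_ /(chainP hc) [L k']].
rewrite inlk (cG _ _ L (subsetU1 x s)) /= disjoint_sym disjoints1 xs setUC L /=.
by move: k'; rewrite cardsU1 xs add1n => -[->].
Qed.

Lemma lp_cycle x c : (forall s, bd c (x |: s) = 0) -> bd (lp x c) = 0.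
Proof. by move=> h; apply/ffunP=> s; rewrite bd_lp h mulr0 ch0 if_same. Qed.

Definition Ext G t n := forall z : ch, chain_of G n z -> supp_in (cost G t) (bd z) ->
  exists2 w : ch, chain_of G n w /\ bd w = 0 & supp_in (cost G t) (z - w).

Lemma Ext_rel G t n : Ext G t n -> rel_surj F G (cost G t) n.
Proof.
move=> h z hz hb; have [w [hw bw] hs] := h z hz hb.
by exists w, 0; split=> //; [exact: chain0 | rewrite bd0 subr0].
Qed.

Lemma Ext0 G n : Ext G set0 n.
Proof.
move=> z hz hb; exists z; last by move=> s; rewrite chB subrr eqxx.
split=> //; apply/ffunP=> s; rewrite ch0; apply/eqP; apply: contraT => /hb.
by rewrite incost sub0set andbF.
Qed.


Lemma lk_complex G t : is_complex G -> is_complex (lk G t).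
Proof.
move=> cG s u; rewrite !inlk => /and3P[sG dst stG] us; apply/and3P; split.
- exact: cG sG us.
- exact: disjointWl us dst.
- exact: cG _ _ stG (setSU t us).
Qed.

Lemma lk0 G : lk G set0 = G.
Proof.
apply/setP => s; rewrite inlk setU0; case sG: (s \in G) => //=; rewrite andbT.
by apply/disjP => x _; rewrite inE.
Qed.

Lemma disj1 s (v : V) : [disjoint s & [set v]] = (v \notin s).
Proof. by rewrite disjoint_sym disjoints1. Qed.

Lemma disjU1 s (v : V) t : [disjoint s & v |: t] = (v \notin s) && [disjoint s & t].
Proof.
apply/disjP/andP => [h|[vs /disjP h] x xs].
  split; first by apply/negP => vs; move: (h v vs); rewrite !inE eqxx.
  by apply/disjP => x xs; move: (h x xs); rewrite !inE negb_or => /andP[].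
rewrite !inE negb_or (h x xs) andbT; by apply: contraNneq vs => <-.
Qed.

Lemma lk_lk G v t : is_complex G -> v \notin t -> lk (lk G [set v]) t = lk G (v |: t).
Proof.
move=> cG vt; apply/setP => s; rewrite !inlk disj1 disjU1.
have e1 : s :|: t :|: [set v] = s :|: (v |: t).
  by apply/setP=> u; rewrite !inE; case: (u \in s); case: (u == v); case: (u \in t).
apply/idP/idP.
  case/andP=> /and3P[sG vs _] /andP[dst /and3P[_ _]]; rewrite e1 => H.
  by rewrite sG vs dst H.
case/and3P=> sG /andP[vs dst] H.
rewrite sG vs dst e1 H /= andbT.
rewrite (cG _ _ H); last by apply/subsetP=> u; rewrite !inE; case: (u \in s); case: (u == v).
rewrite (cG _ _ H) /=; last by apply/subsetP=> u; rewrite !inE; case: (u \in s); case: (u == v).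
by rewrite disj1 !inE negb_or vs.
Qed.

Lemma chain_lk_free G k x c s : chain_of (lk G [set x]) k c -> x \in s -> c s = 0.
Proof.
move=> h xs; apply/eqP; apply: contraT => /(chainP h) [L _].
by move: L; rewrite inlk disj1 xs andbF.
Qed.

Lemma subD1 (v : V) t s : v \notin t -> v |: t \subset s -> t \subset s :\ v.
Proof.
move=> vt /subsetP sub; apply/subsetP => u ut; rewrite !inE sub ?andbT; last by rewrite !inE ut orbT.
by apply: contraNneq vt => <-.
Qed.

Lemma ExtV G v k : is_complex G ->
  (forall y : ch, chain_of (lk G [set v]) k y -> bd y = 0 ->
     exists2 e, chain_of (del G [set v]) k.+1 e & bd e = y) ->
  Ext G [set v] k.+1.
Proof.
move=> cG hyp z hz hb.
set y := lp v z.
have hy : chain_of (lk G [set v]) k y := lp_chain cG hz.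
have by0 : bd y = 0.
  apply: lp_cycle => s; apply/eqP; apply: contraT => /hb.
  by rewrite incost sub1set setU11 andbF.
have [e he be] := hyp y hy by0.
have yv : forall s, v \in s -> y s = 0 by move=> s vs; rewrite lp_vfree.
have hed : chain_of G k.+1 e by apply: chain_sub he => s; rewrite indel => /andP[].
have hw : chain_of G k.+1 (cone v y - e) := chainB (cone_chain cG hy) hed.
exists (cone v y - e).
  by split=> //; rewrite bdB bd_cone // by0 cone0 subr0 be subrr.
move=> s nz; have [sG _] := chainP (chainB hz hw) nz.
move: nz; rewrite incost sG !chB cone_lp sub1set /=.
case: ifP => // vs.
rewrite opprB addrC subrK => /(chainP he) [].
by rewrite indel disj1 vs andbF.
Qed.

Lemma ExtStep G v t k : is_complex G -> v \notin t ->
  Ext G [set v] k.+1 -> Ext (lk G [set v]) t k -> Ext G (v |: t) k.+1.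
Proof.
move=> cG vt hV hL z hz hb.
set z' := lp v z.
have hz' : chain_of (lk G [set v]) k z' := lp_chain cG hz.
have hb' : supp_in (cost (lk G [set v]) t) (bd z').
  move=> s nz; have sL := bd_supp (lk_complex cG) hz' nz.
  move: nz; rewrite bd_lp incost sL /=; case: ifP => vs; first by rewrite eqxx.
  rewrite mulf_eq0 negb_or => /andP[_ /hb]; rewrite incost => /andP[_].
  by apply: contra => ts; apply: setUS.
have [w' [hw' bw'] hs'] := hL z' hz' hb'.
have hc : chain_of G k.+1 (cone v w') := cone_chain cG hw'.
have w'v : forall s, v \in s -> w' s = 0 by move=> s; apply: chain_lk_free hw'.
have hbc : supp_in (cost G [set v]) (bd (cone v w')).
  rewrite bd_cone // bw' cone0 subr0 => s nz; have [sL _] := chainP hw' nz.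
  by move: sL; rewrite inlk incost sub1set disj1 => /and3P[-> -> _].
have [w [hw bw] hs] := hV _ hc hbc.
exists w => //.
move=> s nz; have [sG _] := chainP (chainB hz hw) nz.
rewrite incost sG /=; apply/negP => sub.
have vs : v \in s by apply: (subsetP sub); rewrite setU11.
have e1 : (cone v w' - w) s = 0.
  apply/eqP; apply: contraT => /hs; by rewrite incost sub1set vs andbF.
have e2 : (z' - w') (s :\ v) = 0.
  apply/eqP; apply: contraT => /hs'; by rewrite incost subD1 // andbF.
move: nz; rewrite chB; have := cone_lp v z s; rewrite vs => <-.
move: e1 e2; rewrite !chB !coneE vs => /eqP; rewrite subr_eq0 => /eqP <-.
by move/eqP; rewrite subr_eq0 => /eqP ->; rewrite subrr eqxx.
Qed.

Lemma ExtLink1 G v t k : is_complex G -> v \notin t ->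
  Ext G (v |: t) k.+1 -> Ext (lk G [set v]) t k.
Proof.
move=> cG vt H y hy hb.
have yv : forall s, v \in s -> y s = 0 by move=> s; apply: chain_lk_free hy.
have hc : chain_of G k.+1 (cone v y) := cone_chain cG hy.
have hbc : supp_in (cost G (v |: t)) (bd (cone v y)).
  move=> s nz; have [sG _] := chainP (bd_chain cG hc) nz.
  rewrite incost sG /=; move: nz; rewrite bd_cone // chB coneE.
  case: ifP => vs; last first.
    by move=> _; apply/negP => /subsetP /(_ v (setU11 _ _)); rewrite vs.
  rewrite yv // sub0r oppr_eq0 mulf_eq0 negb_or => /andP[_ /hb].
  rewrite incost => /andP[_]; apply: contra; exact: subD1.
have [W [hW bW] hs] := H _ hc hbc.
exists (lp v W).
  split; first exact: lp_chain cG hW.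
  by apply: lp_cycle => s; rewrite bW ch0.
move=> s nz; have [sL _] := chainP (chainB hy (lp_chain cG hW)) nz.
rewrite incost sL /=; apply/negP => ts.
have vs : v \notin s by move: sL; rewrite inlk disj1 => /and3P[].
have e1 : (cone v y - W) (v |: s) = 0.
  apply/eqP; apply: contraT => /hs; rewrite incost => /andP[_].
  by rewrite setUS.
move: nz e1; rewrite !chB lpE (negPf vs) coneE setU11 setU1K //.
move=> nz /eqP; rewrite subr_eq0 => /eqP e1.
by move: nz; rewrite -e1 mulrA eps2 mul1r subrr eqxx.
Qed.


Lemma ExtInd G (tau : {set V}) n : is_complex G -> (#|tau| <= n)%N ->
  (forall (sig : {set V}) u, sig \subset tau -> u \in tau -> u \notin sig ->
     Ext (lk G sig) [set u] (n - #|sig|)) -> Ext G tau n.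
Proof.
move: (leqnn #|tau|); move: {2}#|tau| => m.
elim: m tau G n => [|m IH] tau G n.
  rewrite leqn0 cards_eq0 => /eqP -> *; exact: Ext0.
move=> hm cG hn H.
case: (set_0Vmem tau) => [->|[v vt]]; first exact: Ext0.
set t' := tau :\ v.
have vt' : v \notin t' by rewrite !inE eqxx.
have ett : tau = v |: t' by rewrite setD1K.
have ct : #|tau| = #|t'|.+1 by rewrite (cardsD1 v) vt.
case: n hn H => [|k]; first by rewrite ct.
move=> hn H; rewrite ett; apply: ExtStep => //.
  by have := H set0 v (sub0set _) vt (negbT (in_set0 v)); rewrite lk0 cards0 subn0.
apply: IH.
- by move: hm; rewrite ct.
- exact: lk_complex.
- by move: hn; rewrite ct.
move=> sig u ss ut us.
have vs : v \notin sig by apply: contra vt' => /(subsetP ss).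
rewrite lk_lk //.
have -> : (k - #|sig| = k.+1 - #|v |: sig|)%N by rewrite cardsU1 vs add1n subSS.
apply: H.
- by rewrite ett; apply: setUS.
- by move: ut; rewrite !inE => /andP[].
- rewrite !inE negb_or us andbT; by move: ut; rewrite !inE => /andP[].
Qed.

Lemma ExtLink G (sig t : {set V}) n : is_complex G -> [disjoint sig & t] ->
  (#|sig| <= n)%N -> Ext G (sig :|: t) n -> Ext (lk G sig) t (n - #|sig|).
Proof.
move: (leqnn #|sig|); move: {2}#|sig| => m.
elim: m sig G n => [|m IH] sig G n.
  rewrite leqn0 cards_eq0 => /eqP -> _ _ _ H; rewrite lk0 cards0 subn0; by rewrite set0U in H.
move=> hm cG dst hn H.
case: (set_0Vmem sig) => [e0|[v vs]].
  by move: H; rewrite e0 lk0 cards0 subn0 set0U.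
set s' := sig :\ v.
have vs' : v \notin s' by rewrite !inE eqxx.
have es : sig = v |: s' by rewrite setD1K.
have cs : #|sig| = #|s'|.+1 by rewrite (cardsD1 v) vs.
case: n hn H => [|k]; first by rewrite cs.
move=> hn H.
have vt : v \notin t by apply: (disjP _ _ dst).
have vst : v \notin s' :|: t by rewrite in_setU negb_or vs' vt.
have H1 : Ext (lk G [set v]) (s' :|: t) k.
  apply: ExtLink1 => //; by rewrite setUA -es.
rewrite cs es -lk_lk // subSS.
apply: IH => //.
- by move: hm; rewrite cs.
- exact: lk_complex.
- by apply: disjointWl dst; rewrite es subsetU1.
- by move: hn; rewrite cs.
Qed.

Lemma Peel G k (X : {set V}) (b : ch) (g : V -> ch) :
  chain_of G k b ->
  (forall x, x \in X -> [/\ chain_of G k (g x), bd (g x) = 0,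
      (forall s, x \in s -> g x s = b s) &
      (forall s x', x' \in X -> x' != x -> x' \in s -> g x s = 0)]) ->
  [/\ chain_of G k (b - \sum_(x in X) g x), bd (b - \sum_(x in X) g x) = bd b &
      forall s, (b - \sum_(x in X) g x) s != 0 -> [disjoint s & X]].
Proof.
move=> hb hg.
have key : forall s x0, x0 \in X -> x0 \in s -> (b - \sum_(x in X) g x) s = 0.
  move=> s x0 x0X x0s; rewrite chB sumE (bigD1 x0) //=.
  have [_ _ h1 _] := hg x0 x0X; rewrite h1 // big1 ?addr0 ?subrr //.
  move=> x /andP[xX xx0]; have [_ _ _ h2] := hg x xX; apply: (h2 s x0) => //.
  by rewrite eq_sym.
split.
- move=> s nz; case: (eqVneq (b s) 0) => [b0|/hb //].
  move: nz; rewrite chB sumE b0 sub0r oppr_eq0 => nz.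
  case: (pickP (fun x => (x \in X) && (g x s != 0))) => [x /andP[xX gx]|h0].
    by have [h _ _ _] := hg x xX; exact: h.
  move: nz; rewrite big1 ?eqxx // => x xX.
  by move: (h0 x); rewrite xX /= => /negbFE/eqP.
- by rewrite bdB bd_sum big1 ?subr0 // => x /hg [].
move=> s nz; apply/disjP => x xs; apply/negP => xX.
by move: nz; rewrite (key s x xX xs) eqxx.
Qed.

End Chains.

Section Complex.
Variables (F : fieldType) (V : finType) (d : nat) (kappa : V -> 'I_d).
Local Notation ch := {ffun {set V} -> F}.
Implicit Types (s t : {set V}) (G K L : {set {set V}}).

Definition inj_col K := forall s x y, s \in K -> x \in s -> y \in s -> kappa x = kappa y -> x = y.

Lemma inrs L S s : (s \in rank_sel L kappa S) = (s \in L) && (kappa @: s \subset S).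
Proof. by rewrite inE. Qed.

Lemma colP s (S : {set 'I_d}) : reflect (forall y, y \in s -> kappa y \in S) (kappa @: s \subset S).
Proof.
apply: (iffP subsetP) => h y ys; first by apply: h; apply: imset_f.
by case/imsetP: ys => y' y's ->; exact: h.
Qed.

Lemma rs_complex L S : is_complex L -> is_complex (rank_sel L kappa S).
Proof.
move=> cL s u; rewrite !inrs => /andP[sL cs] us; rewrite (cL _ _ sL us) /=.
exact: subset_trans (imsetS _ us) cs.
Qed.

Lemma setU1A s (x : V) t : s :|: (x |: t) = s :|: [set x] :|: t.
Proof. by apply/setP=> u; rewrite !inE; case: (u \in s); case: (u == x). Qed.

Lemma lk_sub K t s : is_complex K -> s \in lk K t -> s \in K.
Proof. by move=> cK; rewrite inlk => /and3P[]. Qed.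

Lemma lkU1_sub K (x : V) t s : is_complex K -> s \in lk K (x |: t) -> s \in lk K t.
Proof.
move=> cK; rewrite !inlk disjU1 => /and3P[-> /andP[_ ->] H] /=.
apply: cK H _; apply/subsetP => u; rewrite !inE; case: (u \in s) => //=; by move=> ->; rewrite orbT.
Qed.

Section VL.
Variable K : {set {set V}}.
Hypotheses (cK : is_complex K) (iK : inj_col K)
  (hB : forall t, t \in K -> t != set0 -> forall k, (k < d - #|t|)%N -> Hvanish F (lk K t) k).

Lemma VL n : forall t (P : {set 'I_d}) k, t \in K -> t != set0 ->
  [disjoint P & kappa @: t] -> #|P| = n -> (k + #|t| + n < d)%N ->
  Hvanish F (rank_sel (lk K t) kappa (~: P)) k.
Proof.
elim: n => [|n IH] t P k tK tn dP cP hk.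
  move/eqP: cP; rewrite cards_eq0 => /eqP ->.
  have -> : rank_sel (lk K t) kappa (~: set0) = lk K t.
    by apply/setP=> s; rewrite inrs setC0 subsetT andbT.
  by apply: hB => //; rewrite ltn_subRL addnC; rewrite addn0 in hk.
have [c cP'] : exists c, c \in P by apply/set0Pn; rewrite -cards_eq0 cP.
set P' := P :\ c.
have cP1 : #|P'| = n by move: cP; rewrite (cardsD1 c) cP' add1n => -[].
have sP : P' \subset P by apply: subsetDl.
have dP' : [disjoint P' & kappa @: t] := disjointWl sP dP.
set R' := rank_sel (lk K t) kappa (~: P').
have sRR : {subset rank_sel (lk K t) kappa (~: P) <= R'}.
  move=> s; rewrite !inrs => /andP[-> /colP h]; apply/colP => y ys.
  by move: (h y ys); rewrite !inE => hy; rewrite (negPf hy) andbF.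
move=> z hz bz.
have hk' : (k + #|t| + n < d)%N by apply: leq_ltn_trans hk; rewrite leq_add2l leqnSn.
have [b hb bb] := IH t P' k tK tn dP' cP1 hk' z (chain_sub sRR hz) bz.
have cR' : is_complex R' := rs_complex (lk_complex cK).
set X := [set x | kappa x == c].
have zX : forall s x, x \in X -> x \in s -> z s = 0.
  move=> s x xX xs; apply/eqP; apply: contraT => /(chainP hz) [].
  rewrite inrs => /andP[_ /colP /(_ x xs)]; move: xX; rewrite !inE => /eqP ->.
  by rewrite cP'.
have lpcyc : forall x, x \in X -> bd (lp x b) = 0.
  move=> x xX; apply: lp_cycle => s; rewrite -bb; apply: (zX _ x xX); exact: setU11.
have He : forall x, exists e : ch, x \in X ->
    chain_of (rank_sel (lk K (x |: t)) kappa (~: P')) k.+1 e /\ bd e = lp x b.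
  move=> x; case xX: (x \in X); last by exists 0.
  have kx : kappa x = c by move: xX; rewrite inE => /eqP.
  have xt : x \notin t.
    apply/negP => xt; move/disjP: dP => /(_ c cP'); by rewrite -kx imset_f.
  have hl : chain_of (rank_sel (lk K (x |: t)) kappa (~: P')) k (lp x b).
    apply: chain_sub (lp_chain cR' hb) => s.
    rewrite inlk => /and3P[]; rewrite !inrs !inlk disj1 => /andP[/and3P[sK dst _] cs] xs.
    case/andP => /and3P[_ _ H] _.
    by rewrite sK disjU1 xs dst setU1A H.
  case xtK: (x |: t \in K).
    have hv : Hvanish F (rank_sel (lk K (x |: t)) kappa (~: P')) k.
      apply: IH => //.
      - by apply/set0Pn; exists x; rewrite setU11.
      - apply/disjP => i iP; rewrite imsetU1 !inE negb_or; apply/andP; split.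
          by rewrite kx; move: iP; rewrite !inE => /andP[].
        by apply: (disjP _ _ dP') iP.
      - by rewrite cardsU1 xt add1n addnS addSn -addnS.
    have [e he be] := hv _ hl (lpcyc x xX).
    by exists e => _; split=> //; rewrite be.
  exists 0 => _; split; first exact: chain0.
  rewrite bd0; apply/ffunP=> s; rewrite ch0 lpE; case: ifP => // xs.
  suff -> : b (x |: s) = 0 by rewrite mulr0.
  apply/eqP; apply: contraT => /(chainP hb) [].
  rewrite inrs inlk => /andP[/and3P[_ _ H] _].
  suff : x |: t \in K by rewrite xtK.
  apply: cK H _.
  by apply/subsetP => u; rewrite !inE; case: (u == x) => //=; move=> ->; rewrite orbT.
pose e x := proj1_sig (constructive_indefinite_description _ (He x)).
have eP x : x \in X -> chain_of (rank_sel (lk K (x |: t)) kappa (~: P')) k.+1 (e x) /\ bd (e x) = lp x b.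
  exact: (proj2_sig (constructive_indefinite_description _ (He x))).
have eR : forall x s, x \in X -> e x s != 0 -> s \in lk K (x |: t).
  by move=> x s xX /(chainP (proj1 (eP x xX))) []; rewrite inrs => /andP[].
have hg : forall x, x \in X -> [/\ chain_of R' k.+1 (cone x (lp x b) - e x),
      bd (cone x (lp x b) - e x) = 0,
      (forall s, x \in s -> (cone x (lp x b) - e x) s = b s) &
      (forall s x', x' \in X -> x' != x -> x' \in s -> (cone x (lp x b) - e x) s = 0)].
  move=> x xX; have [he be] := eP x xX.
  have ex0 : forall s, x \in s -> e x s = 0.
    move=> s xs; apply/eqP; apply: contraT => /(eR x s xX); by rewrite inlk disjU1 xs andbF.
  split.
  - apply: chainB.
      move=> s; rewrite cone_lp; case: ifP => _; [exact: hb | by rewrite eqxx].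
    by apply: chain_sub he => s; rewrite !inrs => /andP[/(lkU1_sub cK) -> ->].
  - rewrite bdB bd_cone; first by rewrite lpcyc // cone0 subr0 be subrr.
    by move=> s xs; rewrite lp_vfree.
  - by move=> s xs; rewrite chB cone_lp xs ex0 // subr0.
  - move=> s x' x'X x'x x's; rewrite chB cone_lp.
    have kxx : kappa x' = kappa x by move: x'X xX; rewrite !inE => /eqP -> /eqP ->.
    have -> : e x s = 0.
      apply/eqP; apply: contraT => /(eR x s xX); rewrite inlk => /and3P[_ _ H].
      have := iK H _ _ kxx; rewrite !inE x's eqxx orbT => /(_ isT isT) ex.
      by move: x'x; rewrite ex eqxx.
    case: ifP => xs; last by rewrite subr0.
    rewrite subr0; apply/eqP; apply: contraT => /(chainP hb) [].
    rewrite inrs => /andP[/(lk_sub cK) sK _] _.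
    by move: x'x; rewrite (iK sK x's xs kxx) eqxx.
have [hb' bb' dj] := Peel (X := X) (g := fun x => cone x (lp x b) - e x) hb hg.
exists (b - \sum_(x in X) (cone x (lp x b) - e x)); last by rewrite bb' bb.
move=> s nz; have [sR' sk] := chainP hb' nz.
have dsX := dj s nz.
rewrite inrs sk eqxx andbT; move: sR'; rewrite inrs => /andP[-> /colP h] /=.
apply/colP => y ys; have := h y ys; rewrite !inE negb_and negbK.
have : y \notin X := disjP _ _ dsX y ys.
by rewrite inE => /negPf ->.
Qed.

End VL.

Lemma inj_sub K K' : {subset K' <= K} -> inj_col K -> inj_col K'.
Proof. by move=> sub iK s x y /sub; apply: iK. Qed.

Lemma ColorPeel G k (c : 'I_d) (b : ch) : is_complex G -> inj_col G -> chain_of G k.+1 b ->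
  (forall s x, kappa x = c -> x \in s -> bd b s = 0) ->
  (forall x, kappa x = c -> Hvanish F (lk G [set x]) k) ->
  exists2 b' : ch, chain_of G k.+1 b' /\ bd b' = bd b &
    forall s x, b' s != 0 -> x \in s -> kappa x != c.
Proof.
move=> cG iG hb hbd hv.
set X := [set x | kappa x == c].
have He : forall x, exists e : ch, x \in X -> chain_of (lk G [set x]) k.+1 e /\ bd e = lp x b.
  move=> x; case xX: (x \in X); last by exists 0.
  have kx : kappa x = c by move: xX; rewrite inE => /eqP.
  have [e he be] := hv x kx _ (lp_chain cG hb)
    (lp_cycle (fun s => hbd _ x kx (setU11 x s))).
  by exists e.
pose e x := proj1_sig (constructive_indefinite_description _ (He x)).
have eP x : x \in X -> chain_of (lk G [set x]) k.+1 (e x) /\ bd (e x) = lp x b.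
  exact: (proj2_sig (constructive_indefinite_description _ (He x))).
have hg : forall x, x \in X -> [/\ chain_of G k.+1 (cone x (lp x b) - e x),
      bd (cone x (lp x b) - e x) = 0,
      (forall s, x \in s -> (cone x (lp x b) - e x) s = b s) &
      (forall s x', x' \in X -> x' != x -> x' \in s -> (cone x (lp x b) - e x) s = 0)].
  move=> x xX; have [he be] := eP x xX.
  have kx : kappa x = c by move: xX; rewrite inE => /eqP.
  have ex0 : forall s, x \in s -> e x s = 0 by move=> s; apply: chain_lk_free he.
  split.
  - apply: chainB.
      move=> s; rewrite cone_lp; case: ifP => _; [exact: hb | by rewrite eqxx].
    by apply: chain_sub he => s; apply: lk_sub.
  - rewrite bdB bd_cone; last by move=> s xs; rewrite lp_vfree.
    by rewrite (lp_cycle (fun s => hbd _ x kx (setU11 x s))) cone0 subr0 be subrr.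
  - by move=> s xs; rewrite chB cone_lp xs ex0 // subr0.
  - move=> s x' x'X x'x x's; rewrite chB cone_lp.
    have kxx : kappa x' = kappa x by move: x'X; rewrite kx inE => /eqP.
    have -> : e x s = 0.
      apply/eqP; apply: contraT => /(chainP he) []; rewrite inlk => /and3P[_ _ H] _.
      have := iG _ _ _ H _ _ kxx; rewrite !inE x's eqxx orbT => /(_ isT isT) ex.
      by move: x'x; rewrite ex eqxx.
    case: ifP => xs; last by rewrite subr0.
    rewrite subr0; apply/eqP; apply: contraT => /(chainP hb) [sG _].
    by move: x'x; rewrite (iG _ _ _ sG x's xs kxx) eqxx.
have [hb' bb' dj] := Peel (X := X) (g := fun x => cone x (lp x b) - e x) hb hg.
exists (b - \sum_(x in X) (cone x (lp x b) - e x)) => // s x nz xs.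
have : x \notin X := disjP _ _ (dj s nz) x xs.
by rewrite inE.
Qed.

Lemma Hvanish0 k : Hvanish F (set0 : {set {set V}}) k.
Proof.
move=> z hz _; exists 0; first exact: chain0.
rewrite bd0; apply/ffunP => s; rewrite ch0; apply/eqP; apply: contraT => /(chainP hz) [].
by rewrite in_set0.
Qed.

Lemma lk_empty G (x : V) : is_complex G -> [set x] \notin G -> lk G [set x] = set0.
Proof.
move=> cG xG; apply/setP => s; rewrite inlk in_set0; apply/negP => /and3P[_ _ H].
by move/negP: xG; apply; apply: cG H _; rewrite subsetUr.
Qed.

End Complex.


Lemma arith_a (a b m d : nat) : (a.+1 = m - b)%N -> (m <= d)%N -> (a + b + (d - m) < d)%N.
Proof. move=> h1 /leP h2; apply/ltP; move: h1; rewrite -!minusE -!plusE. lia. Qed.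

Lemma arith_b (k t m d : nat) : (k < m - t)%N -> (m <= d)%N -> (k + t + (d - m) < d)%N.
Proof. move=> /ltP h1 /leP h2; apply/ltP; move: h1; rewrite -!minusE -!plusE. lia. Qed.

Lemma arith_c (k m d : nat) : (k.+1 = m)%N -> (m.+1 <= d)%N -> (k + 1 + (d - m.+1) < d)%N.
Proof. move=> h1 /leP h2; apply/ltP; move: h1 h2; rewrite -!minusE -!plusE. lia. Qed.

Section Main.
Variables (F : fieldType) (V : finType) (d : nat) (kappa : V -> 'I_d).
Local Notation ch := {ffun {set V} -> F}.
Implicit Types (s t : {set V}) (G K L : {set {set V}}).

Lemma lkrs L (S : {set 'I_d}) (r : {set V}) : kappa @: r \subset S ->
  lk (rank_sel L kappa S) r = rank_sel (lk L r) kappa S.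
Proof.
move=> hs; apply/setP => s; rewrite inlk !inrs inlk imsetU subUset hs andbT.
by case: (s \in L); case: (kappa @: s \subset S); case: [disjoint s & r]; case: (s :|: r \in L).
Qed.

Lemma del_rs L (S : {set 'I_d}) A : del (rank_sel L kappa S) A = rank_sel (del L A) kappa S.
Proof.
apply/setP => s; rewrite indel !inrs indel.
by case: (s \in L); case: (kappa @: s \subset S); case: [disjoint s & A].
Qed.

Lemma lk_del L (r : {set V}) (u : V) : u \notin r -> lk (del L [set u]) r = del (lk L r) [set u].
Proof.
move=> us; apply/setP => s; rewrite inlk !indel inlk !disj1 in_setU negb_or (negPf us) andbT.
by case: (s \in L); case: (u \in s); case: [disjoint s & r]; case: (s :|: r \in L).
Qed.

Lemma disjUl1 s (v : V) t : [disjoint s :|: [set v] & t] = [disjoint s & t] && (v \notin t).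
Proof.
apply/disjP/andP => [h|[/disjP h vt] x].
  split; last by apply: h; rewrite !inE eqxx orbT.
  by apply/disjP => x xs; apply: h; rewrite !inE xs.
by rewrite !inE => /orP[/h //|/eqP ->].
Qed.

Lemma lk_lk2 G t (v : V) : is_complex G -> v \notin t -> lk (lk G t) [set v] = lk G (v |: t).
Proof.
move=> cG vt; apply/setP => s; rewrite !inlk disj1 disjU1 disjUl1 vt andbT -setU1A.
apply/idP/idP.
  by case/and3P => /and3P[-> _ _] -> /and3P[_ -> ->].
case/and3P => sG /andP[-> ->] H /=; rewrite sG H /= andbT.
rewrite (cG _ _ H) ?(cG _ _ H) //; apply/subsetP => u; rewrite !inE;
  by case: (u \in s) => //=; move=> ->; rewrite ?orbT.
Qed.



Lemma bal_inj D : is_complex D -> balanced D kappa -> inj_col kappa D.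
Proof.
move=> cD bal s x y sD xs ys kxy; apply/eqP; apply: contraT => nxy.
have := bal x y nxy (cD _ _ sD _); rewrite kxy eqxx; apply.
by apply/subsetP => u; rewrite !inE => /orP[] /eqP ->.
Qed.

Section Gam.
Variables (D : {set {set V}}).
Hypotheses (cD : is_complex D) (iD : inj_col kappa D).

Lemma card_inj s : s \in D -> #|kappa @: s| = #|s|.
Proof. by move=> sD; apply: card_in_imset => x y xs ys; apply: iD sD xs ys. Qed.

Lemma facet_rs (S : {set 'I_d}) t : t \in D -> #|t| = d ->
  [set x in t | kappa x \in S] \in rank_sel D kappa S /\ #|[set x in t | kappa x \in S]| = #|S|.
Proof.
move=> tD td; set s := [set x in t | kappa x \in S].
have st : s \subset t by apply/subsetP => x; rewrite inE => /andP[].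
have sD : s \in D := cD tD st.
have imt : kappa @: t = setT.
  by apply/eqP; rewrite eqEcard subsetT cardsT card_ord card_inj // td leqnn.
split.
  by rewrite inrs sD /=; apply/colP => y; rewrite inE => /andP[].
rewrite -card_inj //; suff -> : kappa @: s = S by [].
apply/setP => i; apply/imsetP/idP.
  by case=> x; rewrite inE => /andP[_ h] ->.
move=> iS; have : i \in kappa @: t by rewrite imt inE.
by case/imsetP => x xt eix; exists x => //; rewrite inE xt -eix iS.
Qed.

Lemma rs_card (S : {set 'I_d}) s : s \in rank_sel D kappa S -> (#|s| <= #|S|)%N.
Proof.
by rewrite inrs => /andP[sD cs]; rewrite -card_inj //; apply: subset_leq_card.
Qed.

Lemma pure_rs (S : {set 'I_d}) : pure_dim D d -> pure_dim (rank_sel D kappa S) #|S|.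
Proof.
case=> [[t tD td] [h2 h3]]; split; [|split].
- by have [? ?] := facet_rs S tD td; eexists; eauto.
- by move=> s; apply: rs_card.
move=> s; rewrite inrs => /andP[sD cs].
have [t' t'D [st t'd]] := h3 s sD; have [h1 h2'] := facet_rs S t'D t'd.
exists [set x in t' | kappa x \in S] => //; split=> //.
apply/subsetP => x xs; rewrite inE (subsetP st x xs) /=.
by apply: (subsetP cs); apply: imset_f.
Qed.

Lemma cdim_rs (S : {set 'I_d}) : pure_dim D d -> cdim (rank_sel D kappa S) = #|S|.
Proof.
case=> [[t tD td] _]; apply/eqP; rewrite eqn_leq; apply/andP; split.
  by apply/bigmax_leqP => s; apply: rs_card.
have [h1 h2] := facet_rs S tD td; rewrite -{1}h2.
rewrite /cdim; exact: (leq_bigmax_cond _ h1).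
Qed.

End Gam.

Lemma del_complex G A : is_complex G -> is_complex (del G A).
Proof.
move=> cG s u; rewrite !indel => /andP[sG ds] us; rewrite (cG _ _ sG us) /=.
exact: disjointWl us ds.
Qed.

Lemma Sd (S : {set 'I_d}) : (#|S| <= d)%N.
Proof. by rewrite -[X in (_ <= X)%N]card_ord max_card. Qed.

Lemma cardC (S : {set 'I_d}) : #|~: S| = (d - #|S|)%N.
Proof. by rewrite -[X in (X - _)%N](card_ord d) -(cardsC S) addKn. Qed.

Lemma disjC (S : {set 'I_d}) s : kappa @: s \subset S -> [disjoint ~: S & kappa @: s].
Proof. by move=> cs; apply/disjP => i; rewrite inE; apply: contra => /(subsetP cs). Qed.

Lemma Buchs_rs D (S : {set 'I_d}) : is_complex D -> inj_col kappa D ->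
  Buchsbaum F D d -> Buchsbaum F (rank_sel D kappa S) #|S|.
Proof.
move=> cD iD [hp hl]; split; first exact: pure_rs.
move=> t; rewrite inrs => /andP[tD ct] tn k hk.
rewrite lkrs // -[S]setCK.
apply: (VL cD iD hl (n := #|~: S|)) => //; first exact: disjC.
by rewrite cardC; apply: arith_b => //; apply: Sd.
Qed.

Section Dbl.
Variables (D : {set {set V}}) (S : {set 'I_d}).
Hypotheses (cD : is_complex D) (iD : inj_col kappa D) (hB : Buchsbaum F D d)
  (hdel : forall v, is_vertex D v -> Buchsbaum F (del D [set v]) d)
  (S0 : S != set0) (ST : S != setT).
Local Notation Gam := (rank_sel D kappa S).

Lemma ExtG1 u : [set u] \in Gam -> Ext F Gam [set u] #|S|.
Proof.
move=> uG; move: (uG); rewrite inrs => /andP[uD /colP /(_ u (set11 u)) ku].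
have : (0 < #|S|)%N by rewrite card_gt0.
case e: #|S| => [//|k] _.
have [c cS] : exists c, c \notin S.
  case: (pickP (fun c => c \notin S)) => [c cS|h]; first by exists c.
  by move/eqP: ST; case; apply/setP => i; rewrite inE; move: (h i) => /negbFE.
apply: ExtV; first exact: rs_complex.
move=> y hy by0.
set P0 := ~: (c |: S).
have cP0 : #|P0| = (d - (#|S|).+1)%N by rewrite cardC cardsU1 cS.
have Sd1 : ((#|S|).+1 <= d)%N by have := Sd (c |: S); rewrite cardsU1 cS add1n.
have ar : (k + #|[set u]| + #|P0| < d)%N by rewrite cards1 cP0; apply: arith_c.
have hv : Hvanish F (rank_sel (lk D [set u]) kappa (~: P0)) k.
  apply: (VL cD iD hB.2 (n := #|P0|)) => //.
  - by apply/set0Pn; exists u; rewrite set11.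
  - apply/disjP => i; rewrite imset_set1 !inE negb_or => /andP[_ iS].
    by apply: contraNneq iS => ->.
have hy' : chain_of (rank_sel (lk D [set u]) kappa (~: P0)) k y.
  apply: chain_sub hy => s; rewrite lkrs ?imset_set1 ?sub1set // !inrs setCK => /andP[-> /= cs].
  by apply: subset_trans cs _; apply: subsetU1.
have [b hb yb] := hv y hy' by0.
set G := rank_sel (del D [set u]) kappa (c |: S).
have hbG : chain_of G k.+1 b.
  apply: chain_sub hb => s; rewrite !inrs setCK inlk indel disj1 => /andP[/and3P[-> -> _] ->].
  by [].
have cG : is_complex G := rs_complex (del_complex cD).
have iG : inj_col kappa G.
  by apply: inj_sub iD => s; rewrite inrs indel => /andP[/andP[]].
have hbd : forall s x, kappa x = c -> x \in s -> bd b s = 0.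
  move=> s x kx xs; rewrite -yb; apply/eqP; apply: contraT => /(chainP hy) [].
  rewrite lkrs ?imset_set1 ?sub1set // inrs => /andP[_ /colP /(_ x xs)].
  by rewrite kx (negPf cS).
have hvx : forall x, kappa x = c -> Hvanish F (lk G [set x]) k.
  move=> x kx; case xG: ([set x] \in G); last by rewrite lk_empty ?xG //; apply: Hvanish0.
  have kxc : kappa @: [set x] \subset c |: S by rewrite imset_set1 sub1set kx setU11.
  rewrite lkrs // -[c |: S]setCK.
  move: xG; rewrite inrs indel => /andP[/andP[xD dx] _].
  apply: (VL (del_complex cD) _ (hdel uD).2 (n := #|P0|)) => //.
  - by apply: inj_sub iD => s; rewrite indel => /andP[].
  - by rewrite indel xD dx.
  - by apply/set0Pn; exists x; rewrite set11.
  - apply/disjP => i; rewrite imset_set1 !inE negb_or => /andP[ic _].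
    by rewrite kx; apply: contra ic => /eqP ->.
  - by move: ar; rewrite !cards1.
have [b' [hb' bb'] hc] := ColorPeel cG iG hbG hbd hvx.
exists b'; last by rewrite bb' yb.
move=> s nz; have [sG sk] := chainP hb' nz.
rewrite sk eqxx andbT indel inrs; move: sG; rewrite inrs indel => /andP[/andP[sD ds] cs].
rewrite sD ds andbT /=; apply/colP => x xs.
have := (subsetP cs) _ (imset_f kappa xs); rewrite !inE => /orP[/eqP kx|//].
by move: (hc s x nz xs); rewrite kx eqxx.
Qed.

Lemma ExtGs r u : r \in Gam -> r != set0 -> u \notin r -> [set u] \in D ->
  (#|r| < #|S|)%N -> Ext F (lk Gam r) [set u] (#|S| - #|r|).
Proof.
move=> rG rn ur uD lt.
move: (rG); rewrite inrs => /andP[rD cr].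
case e: (#|S| - #|r|)%N => [|k]; first by move/eqP: e; rewrite subn_eq0 leqNgt lt.
apply: ExtV; first exact: lk_complex (rs_complex cD).
move=> y hy by0.
have hv : Hvanish F (del (lk Gam r) [set u]) k.
  rewrite lkrs // del_rs -lk_del // -[S]setCK.
  apply: (VL (del_complex cD) _ (hdel uD).2 (n := #|~: S|)) => //.
  - by apply: inj_sub iD => s; rewrite indel => /andP[].
  - by rewrite indel rD disj1.
  - exact: disjC.
  - by rewrite cardC; apply: arith_a => //; apply: Sd.
have hy' : chain_of (del (lk Gam r) [set u]) k y.
  by apply: chain_sub hy => s; rewrite inlk indel disj1 => /and3P[-> -> _].
have [b hb yb] := hv y hy' by0.
by exists b.
Qed.

Lemma ExtGam t : t \in Gam -> Ext F Gam t #|S|.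
Proof.
move=> tG; apply: ExtInd; first exact: rs_complex.
  exact (rs_card iD tG).
move=> r u rt ut ur.
have cG := @rs_complex _ _ kappa D S cD.
case: (eqVneq r set0) => [->|rn].
  rewrite lk0 cards0 subn0; apply: ExtG1; apply: cG tG _; by rewrite sub1set.
have uD : [set u] \in D.
  have : [set u] \subset t by rewrite sub1set.
  by move/(cG _ _ tG); rewrite inrs => /andP[].
apply: ExtGs => //; first exact: cG tG rt.
apply: leq_trans (rs_card iD tG); apply: proper_card.
by rewrite properEneq rt andbT; apply: contraNneq ur => ->.
Qed.

End Dbl.
End Main.

Lemma arith_d (k f d : nat) : (k < d - f)%N -> ~~ (k.+1 < d - f)%N -> (d - f = k.+1)%N.
Proof. move=> /ltP h1 /negP h2; have h3 : ~ (k.+1 < d - f)%coq_nat by move/ltP. move: h1 h3; rewrite -!minusE. lia. Qed.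

Lemma arith_e (k f d : nat) : (k.+1 < d - f)%N -> (k < d - (1 + f))%N.
Proof. move=> /ltP h1; apply/ltP; move: h1; rewrite -!minusE -!plusE. lia. Qed.

Section Star.
Variables (F : fieldType) (V : finType) (d : nat) (D : {set {set V}}).
Local Notation ch := {ffun {set V} -> F}.
Implicit Types (s t : {set V}).
Hypotheses (cD : is_complex D) (hst : Buchsbaum_star_d F D d).

Lemma bd_witness (c : ch) s : bd c s != 0 -> exists2 u, u \notin s & c (u |: s) != 0.
Proof.
rewrite bdE => nz.
case: (pickP (fun v => (v \notin s) && (c (v |: s) != 0))) => [v /andP[vs cv]|h0].
  by exists v.
move: nz; rewrite big1 ?eqxx // => v vs.
by move: (h0 v); rewrite vs /= => /negbFE/eqP ->; rewrite mulr0.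
Qed.

Lemma hp2 : forall s, s \in D -> (#|s| <= d)%N.
Proof. by case: hst => [[[_ [h _]] _] _]. Qed.

Lemma ExtD t : t \in D -> Ext F D t d.
Proof.
move=> tD z hz hbz; have [w [b [hw bw hb hs]]] := hst.2 t tD z hz hbz.
have b0 : b = 0.
  apply/ffunP => s; rewrite ch0; apply/eqP; apply: contraT => /(chainP hb) [sD sk].
  by have := hp2 sD; rewrite sk ltnn.
by exists w => //; rewrite b0 bd0 subr0 in hs.
Qed.

Lemma EXT v s : s \in del D [set v] -> exists2 t, t \in del D [set v] & s \subset t /\ #|t| = d.
Proof.
rewrite indel disj1 => /andP[sD vs].
have [_ [_ hp3]] := hst.1.1.
have [t tD [st td]] := hp3 s sD.
case vt: (v \in t); last by exists t => //; rewrite indel disj1 tD vt.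
set r := t :\ v.
have tr : t = v |: r by rewrite setD1K.
have vr : v \notin r by rewrite !inE eqxx.
set z : ch := [ffun x => if x == t then 1 else 0].
have zE : forall x, z x = if x == t then 1 else 0 by move=> x; exact: ffunE.
have hz : chain_of D d z.
  move=> x; rewrite zE; case: (eqVneq x t) => [->|_]; by rewrite ?eqxx // tD td eqxx.
have hbz : supp_in (cost D t) (bd z).
  move=> x nz; rewrite incost (bd_supp cD hz nz) /=.
  have [u ux] := bd_witness nz; rewrite zE; case: (eqVneq (u |: x) t) => [<- _|]; last by rewrite eqxx.
  by apply/negP => /subsetP /(_ u (setU11 u x)); rewrite (negPf ux).
have [w [hw bw] hs] := ExtD tD hz hbz.
have wt : w t = 1.
  have : (z - w) t = 0.
    by apply/eqP; apply: contraT => /hs; rewrite incost subxx andbF.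
  by rewrite chB zE eqxx => /eqP; rewrite subr_eq0 => /eqP <-.
have [u /andP[ur uv] wu] : exists2 u, (u \notin r) && (u != v) & w (u |: r) != 0.
  case: (pickP (fun u => [&& u \notin r, u != v & w (u |: r) != 0])) => [u /and3P[? ? ?]|h0].
    by exists u => //; apply/andP.
  have : bd w r = 0 by rewrite bw ch0.
  rewrite bdE (bigD1 v) //= -tr wt mulr1 big1 ?addr0.
    by move/eqP; rewrite (negPf (eps_neq0 _ _ _)).
  move=> x /andP[xr xv]; move: (h0 x); rewrite xr xv /= => /negbFE/eqP ->.
  by rewrite mulr0.
have [t'D t'd] := chainP hw wu.
exists (u |: r); first by rewrite indel disj1 t'D in_setU1 negb_or eq_sym uv vr.
split=> //; apply/subsetP => x xs; rewrite in_setU1; apply/orP; right.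
rewrite !inE (subsetP st x xs) andbT.
by apply/negP => /eqP xv; move: vs; rewrite -xv xs.
Qed.

Lemma del_pure v : pure_dim (del D [set v]) d.
Proof.
have [[t0 t0D _] [hp2' _]] := hst.1.1.
split; [|split].
- have e0 : set0 \in del D [set v].
    by rewrite indel (cD t0D (sub0set _)) disj1 in_set0.
  by have [t tD [_ td]] := EXT e0; exists t.
- by move=> s; rewrite indel => /andP[/hp2' ].
- exact: EXT.
Qed.

Lemma del_links v F0 : F0 \in del D [set v] -> F0 != set0 -> forall k, (k < d - #|F0|)%N ->
  Hvanish F (lk (del D [set v]) F0) k.
Proof.
rewrite indel disj1 => /andP[F0D vF0] F0n k hk.
rewrite lk_del // => z hz bz.
set G := lk D F0.
have cG : is_complex G := lk_complex cD.
have hzG : chain_of G k z by apply: chain_sub hz => s; rewrite indel => /andP[].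
have [b hb zb] := hst.1.2 F0 F0D F0n k hk z hzG bz.
have zv : forall s : {set V}, v \in s -> z s = 0.
  move=> s vs; apply/eqP; apply: contraT => /(chainP hz) [].
  by rewrite indel disj1 vs andbF.
have lpcyc : bd (lp v b) = 0 by apply: lp_cycle => s; rewrite -zb zv // setU11.
have [g [hg1 hg2 hg3]] : exists g : ch, [/\ chain_of G k.+1 g, bd g = 0 &
    forall s : {set V}, v \in s -> g s = b s].
  case vF: (v |: F0 \in D); last first.
    exists 0; split; [exact: chain0 | exact: bd0 |].
    move=> s vs; rewrite ch0; apply/esym/eqP; apply: contraT => /(chainP hb) [].
    rewrite inlk => /and3P[_ _ H] _.
    suff : v |: F0 \in D by rewrite vF.
    apply: cD H _; apply/subsetP => x; rewrite !inE => /orP[/eqP ->|->]; by rewrite ?vs ?orbT.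
  have hl : chain_of (lk G [set v]) k (lp v b) := lp_chain cG hb.
  have hc : chain_of G k.+1 (cone v (lp v b)) := cone_chain cG hl.
  have bc : bd (cone v (lp v b)) = lp v b.
    by rewrite bd_cone ?lpcyc ?cone0 ?subr0 // => s vs; rewrite lp_vfree.
  case hk2: (k.+1 < d - #|F0|)%N.
    have hv : Hvanish F (lk D (v |: F0)) k.
      apply: hst.1.2 => //; first by apply/set0Pn; exists v; rewrite setU11.
      by rewrite cardsU1 vF0; apply: arith_e.
    have hl' : chain_of (lk D (v |: F0)) k (lp v b) by rewrite -lk_lk2.
    have [e he eb] := hv _ hl' lpcyc.
    have he' : chain_of (lk G [set v]) k.+1 e by rewrite /G lk_lk2.
    exists (cone v (lp v b) - e); split.
    - by apply: chainB hc (chain_sub (fun s => lk_sub cG) he').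
    - by rewrite bdB bc -eb subrr.
    - by move=> s vs; rewrite chB cone_lp vs (chain_lk_free he' vs) subr0.
  have ek : (d - #|F0| = k.+1)%N by apply: arith_d => //; rewrite hk2.
  have Ex : Ext F G [set v] k.+1.
    rewrite -ek; apply: ExtLink => //; first by rewrite disjoint_sym disjoints1.
      exact: hp2.
    by apply: ExtD; rewrite setUC.
  have hsupp : supp_in (cost G [set v]) (bd (cone v (lp v b))).
    rewrite bc => s nz; have [sL _] := chainP hl nz.
    by move: sL; rewrite inlk incost sub1set disj1 => /and3P[-> -> _].
  have [W [hW bW] hs] := Ex _ hc hsupp.
  exists W; split=> // s vs.
  have : (cone v (lp v b) - W) s = 0.
    by apply/eqP; apply: contraT => /hs; rewrite incost sub1set vs andbF.
  by rewrite chB cone_lp vs => /eqP; rewrite subr_eq0 => /eqP.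
have hg : forall x, x \in [set v] -> [/\ chain_of G k.+1 ((fun _ => g) x), bd ((fun _ => g) x) = 0,
      (forall s, x \in s -> (fun _ => g) x s = b s) &
      (forall s x', x' \in [set v] -> x' != x -> x' \in s -> (fun _ => g) x s = 0)].
  move=> x; rewrite inE => /eqP ->; split=> //.
  by move=> s x'; rewrite inE => /eqP ->; rewrite eqxx.
have [hb' bb' dj] := Peel (X := [set v]) (g := fun _ => g) hb hg.
exists (b - \sum_(x in [set v]) g); last by rewrite bb' zb.
move=> s nz; have [sG sk] := chainP hb' nz.
by rewrite indel sG sk eqxx /= andbT (dj s nz).
Qed.

Lemma star_doubly : doubly_Buchsbaum F D d.
Proof.
split; first exact: hst.1.
move=> v _; split; first exact: del_pure.
exact: del_links.
Qed.

End Star.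

Local Close Scope ring_scope.
Unset Implicit Arguments.

Theorem mainTheorem1 (F : fieldType) (V : finType) (d : nat)
  (D : {set {set V}}) (kappa : V -> 'I_d) :
  (2 <= d)%N -> is_complex D -> balanced D kappa ->
  (doubly_Buchsbaum F D d ->
     forall S : {set 'I_d}, S != set0 -> S != setT ->
       Buchsbaum_star F (rank_sel D kappa S)) /\
  (Buchsbaum_star_d F D d ->
     forall S : {set 'I_d}, S != set0 -> S != setT ->
       Buchsbaum_star F (rank_sel D kappa S)).
Proof.
move=> _ cD bal; have iD := bal_inj cD bal.
have P1 : doubly_Buchsbaum F D d -> forall S : {set 'I_d}, S != set0 -> S != setT ->
    Buchsbaum_star F (rank_sel D kappa S).
  move=> [hB hdel] S S0 ST; rewrite /Buchsbaum_star (cdim_rs cD iD _ hB.1); split.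
    exact: Buchs_rs.
  by move=> t tG; apply: Ext_rel; apply: ExtGam.
split=> // hst; apply: P1; exact: star_doubly.
Qed.
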